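(* Let $\mathcal L$ be a finite-dimensional Lie algebra over $\mathbb Q_p$ with $(\mathcal L,\mathcal L)=\mathcal L$, of dimension $d$, and let $\sigma$ be a Lie algebra automorphism of $\mathcal L$ of order $2$, with type $t_\sigma(\mathcal L)=(a,b)$. Then $a\ne0$ and $b>1$.
   Context: $t_\sigma(\mathcal L)=(a,b)$ with $a=\dim\ker(\sigma-\mathrm{id})$ and $b=\dim\ker(\sigma+\mathrm{id})$, so $a+b=d$. *)

(* Defs.v *)
From HB Require Import structures.
From mathcomp Require Import all_boot all_order all_algebra.
Set Implicit Arguments. Unset Strict Implicit. Unset Printing Implicit Defensive.
Import GRing.Theory.
Local Open Scope ring_scope.

Definition is_lie_algebra (F : fieldType) (V : vectType F) (br : V -> V -> V) : Prop :=
  [/\ (forall x, linear (br x)),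
      (forall y, linear (fun x => br x y)),
      (forall x, br x x = 0) &
      (forall x y z, br x (br y z) + br y (br z x) + br z (br x y) = 0)].

(* (L,L) = L : every element lies in the linear span of the brackets [x,y] *)
Definition lie_perfect (F : fieldType) (V : vectType F) (br : V -> V -> V) : Prop :=
  forall z : V, exists s : seq (F * V * V),
    z = \sum_(t <- s) t.1.1 *: br t.1.2 t.2.

Definition is_lie_aut (F : fieldType) (V : vectType F) (br : V -> V -> V)
  (sigma : 'End(V)) : Prop :=
  lker sigma = 0%VS /\ (forall x y, sigma (br x y) = br (sigma x) (sigma y)).

Definition order2 (F : fieldType) (V : vectType F) (sigma : 'End(V)) : Prop :=
  (sigma \o sigma)%VF = \1%VF /\ sigma != \1%VF.

Definition lie_type (F : fieldType) (V : vectType F) (sigma : 'End(V)) : nat * nat :=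
  (\dim (lker (sigma - \1%VF)), \dim (lker (sigma + \1%VF))).

(* Main.v *)
Require Import Defs.
From HB Require Import structures.
From mathcomp Require Import all_boot all_order all_algebra.
Import GRing.Theory.
Local Open Scope ring_scope.

Lemma lin0 {F : fieldType} {U W : lmodType F} {f : U -> W} :
  linear f -> f 0 = 0.
Proof.
move=> hf; have h := hf 1 0 0; rewrite !scale1r !addr0 in h.
by apply: (addrI (f 0)); rewrite addr0 -h.
Qed.

Lemma linD {F : fieldType} {U W : lmodType F} {f : U -> W} :
  linear f -> forall x y, f (x + y) = f x + f y.
Proof. by move=> hf x y; have := hf 1 x y; rewrite !scale1r => ->. Qed.

Lemma linZ {F : fieldType} {U W : lmodType F} {f : U -> W} :
  linear f -> forall a x, f (a *: x) = a *: f x.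
Proof. by move=> hf a x; have := hf a x 0; rewrite !addr0 lin0 // addr0 => ->. Qed.

Lemma linN {F : fieldType} {U W : lmodType F} {f : U -> W} :
  linear f -> forall x, f (- x) = - f x.
Proof. by move=> hf x; rewrite -scaleN1r linZ // scaleN1r. Qed.

Lemma linsum {F : fieldType} {U W : lmodType F} {f : U -> W} (I : Type)
  (s : seq I) (g : I -> F) (h : I -> U) :
  linear f -> f (\sum_(t <- s) g t *: h t) = \sum_(t <- s) g t *: f (h t).
Proof.
move=> hf; elim: s => [|t s IH]; first by rewrite !big_nil lin0.
by rewrite !big_cons linD // linZ // IH.
Qed.

Theorem mainTheorem13 (F : fieldType) (V : vectType F) (br : V -> V -> V)
  (sigma : 'End(V)) (a b : nat) :
  [pchar F] =i pred0 ->
  is_lie_algebra br ->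
  lie_perfect br ->
  is_lie_aut br sigma ->
  order2 sigma ->
  lie_type sigma = (a, b) ->
  (a != 0)%N /\ (1 < b)%N.
Proof.
move=> hchar [hr hl halt hjac] hperf [_ hsb] [hss hne] [<- <-].
have ss x : sigma (sigma x) = x.
  by rewrite -comp_lfunE hss id_lfunE.
have brDr x : forall u w, br x (u + w) = br x u + br x w := linD (hr x).
have brZr x : forall k u, br x (k *: u) = k *: br x u := linZ (hr x).
have brNr x : forall u, br x (- u) = - br x u := linN (hr x).
have br0r x : br x 0 = 0 := lin0 (hr x).
have brDl y : forall u w, br (u + w) y = br u y + br w y := linD (hl y).
have brZl y : forall k u, br (k *: u) y = k *: br u y := linZ (hl y).
have brNl y : forall u, br (- u) y = - br u y := linN (hl y).
have br0l y : br 0 y = 0 := lin0 (hl y).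
have anti x y : br x y = - br y x.
  have := halt (x + y); rewrite brDr !brDl !halt add0r addr0 => /eqP.
  by rewrite addr_eq0 => /eqP ->; rewrite opprK.
have fixE x : (x \in lker (sigma - \1%VF)) = (sigma x == x).
  by rewrite memv_ker add_lfunE opp_lfunE id_lfunE subr_eq0.
have antE x : (x \in lker (sigma + \1%VF)) = (sigma x == - x).
  by rewrite memv_ker add_lfunE id_lfunE addr_eq0.
have two0 : (2%:R : F) != 0.
  by rewrite ((pcharf0P F).1 hchar).
split.
- apply/negP => /eqP /eqP; rewrite dimv_eq0 => /eqP K0.
  have fix0 x : sigma x = x -> x = 0.
    by move=> h; apply/eqP; rewrite -memv0 -K0 fixE h.
  have neg x : sigma x = - x.
    apply/eqP; rewrite -subr_eq0 opprK addrC; apply/eqP/fix0.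
    by rewrite linearD /= ss addrC.
  have all0 (x : V) : x = 0.
    have [s ->] := hperf x.
    rewrite big_seq big1 // => t _.
    rewrite (fix0 (br t.1.2 t.2)) ?scaler0 //.
    by rewrite hsb !neg brNl brNr opprK.
  by move/negP: hne; apply; apply/eqP/lfunP => x; rewrite id_lfunE (all0 x) linear0.
rewrite ltnNge; apply/negP; rewrite leq_eqVlt ltnS leqn0 => hdim.
have four0 (w : V) : (2%:R : F) *: ((2%:R : F) *: w) = 0 -> w = 0.
  by move/eqP; rewrite scalerA scaler_eq0 mulf_eq0 (negbTE two0) /= => /eqP.
have twoK (w : V) : (2%:R : F) *: w = w + w by rewrite scaler_nat mulr2n.
have ssE (w : V) : sigma (sigma w) = w := ss w.
pose P (x : V) := x + sigma x.
pose M (x : V) := x - sigma x.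
have sP x : sigma (P x) = P x by rewrite /P linearD /= ss addrC.
have sM x : sigma (M x) = - M x by rewrite /M linearB /= ss opprB.
have PM x : (2%:R : F) *: x = P x + M x.
  by rewrite /P /M addrACA subrr addr0 twoK.
have dec x y : (2%:R : F) *: ((2%:R : F) *: br x y) =
   br (P x) (P y) + br (P x) (M y) + br (M x) (P y) + br (M x) (M y).
  by rewrite -brZl -brZr !PM brDl !brDr !addrA.
have linP : linear (fun w => P w).
  move=> k u w; rewrite /P linearD linearZ /=.
  by rewrite scalerDr !addrA; congr (_ + _); rewrite -!addrA [w + _]addrC.
have linM : linear (fun w => M w).
  move=> k u w; rewrite /M linearD linearZ /=.
  by rewrite scalerDr opprD scalerN !addrA; congr (_ + _); rewrite -!addrA [w + _]addrC.
have Panti w : sigma w = - w -> P w = 0 by move=> h; rewrite /P h subrr.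
have Mfix w : sigma w = w -> M w = 0 by move=> h; rewrite /M h subrr.
have sPP x y : sigma (br (P x) (P y)) = br (P x) (P y) by rewrite hsb !sP.
have sMM x y : sigma (br (M x) (M y)) = br (M x) (M y).
  by rewrite hsb !sM brNl brNr opprK.
have sPM x y : sigma (br (P x) (M y)) = - br (P x) (M y).
  by rewrite hsb sP sM brNr.
have sMP x y : sigma (br (M x) (P y)) = - br (M x) (P y).
  by rewrite hsb sP sM brNl.
have Pbr x y : (2%:R : F) *: ((2%:R : F) *: P (br x y)) =
    P (br (P x) (P y)) + P (br (M x) (M y)).
  rewrite -!(linZ linP) dec !(linD linP) (Panti _ (sPM x y)) (Panti _ (sMP x y)).
  by rewrite !addr0.
have Mbr x y : (2%:R : F) *: ((2%:R : F) *: M (br x y)) =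
    M (br (P x) (M y)) + M (br (M x) (P y)).
  rewrite -!(linZ linM) dec !(linD linM) (Mfix _ (sPP x y)) (Mfix _ (sMM x y)).
  by rewrite add0r addr0.
case/orP: hdim => hdim; last first.
  move: hdim; rewrite dimv_eq0 => /eqP K0.
  move/negP: hne; apply; apply/eqP/lfunP => x; rewrite id_lfunE.
  have : M x \in lker (sigma + \1%VF) by rewrite antE sM.
  by rewrite K0 memv0 /M subr_eq0 => /eqP.
set v := vpick (lker (sigma + \1%VF)).
have v0 : v != 0 by rewrite vpick0 -dimv_eq0 (eqP hdim).
have Kv : lker (sigma + \1%VF) = <[v]>%VS.
  apply/eqP; rewrite eq_sym eqEdim dim_vline v0 (eqP hdim) andbT -memvE memv_pick.
  by [].
have antiL u : sigma u = - u -> exists k, u = k *: v.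
  by move=> h; apply/vlineP; rewrite -Kv antE h.
have sv : sigma v = - v by apply/eqP; rewrite -antE memv_pick.
have F2 u1 u2 : sigma u1 = u1 -> sigma u2 = u2 -> br (br u1 u2) v = 0.
  move=> h1 h2.
  have [k1 e1] : exists k, br u1 v = k *: v by apply: antiL; rewrite hsb h1 sv brNr.
  have [k2 e2] : exists k, br u2 v = k *: v by apply: antiL; rewrite hsb h2 sv brNr.
  have J := hjac u1 u2 v.
  rewrite e2 brZr e1 (anti v u1) e1 brNr brZr e2 !scalerA mulrC subrr add0r in J.
  by rewrite anti J oppr0.
have F3 w1 w2 : sigma w1 = - w1 -> sigma w2 = - w2 -> br w1 w2 = 0.
  move=> /antiL [k1 ->] /antiL [k2 ->].
  by rewrite brZl brZr halt !scaler0.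
pose g w := br (P w) v.
have lg : linear g.
  by move=> k u w; rewrite /g (linP k u w) brDl brZl.
have F4 u : sigma u = u -> br u v = 0.
  move=> hu; have [s es] := hperf u.
  have : g u = 0.
    rewrite es (linsum _ s (fun t => t.1.1) (fun t => br t.1.2 t.2) lg) big1 // => t _.
    apply/eqP; rewrite scaler_eq0; apply/orP; right; apply/eqP.
    apply: four0; rewrite /g -!brZl Pbr brDl {1}/P sPP -twoK brZl F2 ?sP // scaler0.
    rewrite (F3 (M _) (M _)) ?sM // (lin0 linP) br0l addr0.
    by [].
  rewrite /g /P hu -twoK brZl => /eqP; rewrite scaler_eq0 (negbTE two0) /=.
  by move/eqP.
have : M v = 0.
  have [s es] := hperf v.
  rewrite es (linsum _ s (fun t => t.1.1) (fun t => br t.1.2 t.2) linM) big1 // => t _.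
  apply/eqP; rewrite scaler_eq0; apply/orP; right; apply/eqP.
  apply: four0; rewrite Mbr.
  have [k ->] := antiL _ (sM t.2).
  have [k' ->] := antiL _ (sM t.1.2).
  rewrite brZr F4 ?sP // scaler0 brZl (anti v) F4 ?sP // oppr0 scaler0.
  by rewrite (lin0 linM) addr0.
rewrite /M sv opprK -twoK => /eqP; rewrite scaler_eq0 (negbTE two0) /=.
by rewrite (negbTE v0).
Qed.
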